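(* Let $\mathbb{B}$ be a complete Boolean algebra and $V$ a semi ${\tt D}\mathbb{B}$-valuation. For $T=\lambda\vec x.G(x_1,\dots,x_n)\in Tm_1^{(n)}$ define $V(T):Tm_0^n\to{\tt D}\mathbb{B}$ by $V(T)(t_1,\dots,t_n):=V(G(t_1,\dots,t_n))$. Let $\mathcal{M}=(D_0,D_1)$ be the ${\tt D}\mathbb{B}$-valued model with $D_0=Tm_0$ and $D_1^{(n)}=\{V(T):T\in Tm_1^{(n)}\}$. Then: (1) for every formula $F(X_1,\dots,X_k)$ (free first-order variables being elements of $Tm_0=D_0$), all abstracts $T_i$ of the arity of $X_i$, and $\alpha_i=V(T_i)$, we have $V(F(T_1,\dots,T_k))\unlhd\mathcal{M}(F(\bar\alpha_1,\dots,\bar\alpha_k))$; and (2) $\mathcal{M}\models 3CA$.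
   Context: Language/abstracts: second-order language without relation or function symbols; $Tm_0$ = first-order terms; $Tm_1^{(n)}$ = $n$-ary abstracts $\lambda\vec x.G$; $F(T)$ = substitution of abstract $T$ for $X$. For a cBa $\mathbb{B}$: ${\tt D}\mathbb{B}=\{(a,b)\in\mathbb{B}^2:a\le b\}$, ${\tt a}=(\Box{\tt a},\Diamond{\tt a})$; ${\tt a}\unlhd{\tt b}$ iff $\Box{\tt a}\le\Box{\tt b}$ and $\Diamond{\tt a}\ge\Diamond{\tt b}$; $-{\tt a}=(-\Diamond{\tt a},-\Box{\tt a})$; $\sup_<,\inf_<$ componentwise. For $\alpha,\beta:D_0^n\to{\tt D}\mathbb{B}$, $\alpha\unlhd\beta$ means $\alpha(\vec t)\unlhd\beta(\vec t)$ for all $\vec t\in D_0^n$. A semi ${\tt D}\mathbb{B}$-valuation is a map $V$ from formulas to ${\tt D}\mathbb{B}$ with $V(\lnot F)\unlhd-V(F)$, $V(F_0\lor F_1)\unlhd\sup_<\{V(F_0),V(F_1)\}$, $V(F_0\land F_1)\unlhd\inf_<\{V(F_0),V(F_1)\}$, $V(\exists xF(x))\unlhd\sup_<\{V(F(t)):t\in Tm_0\}$, $V(\forall xF(x))\unlhd\inf_<\{V(F(t)):t\in Tm_0\}$, $V(\exists X^nF(X))\unlhd\sup_<\{V(F(T)):T\in Tm_1^{(n)}\}$, $V(\forall X^nF(X))\unlhd\inf_<\{V(F(T)):T\in Tm_1^{(n)}\}$. A ${\tt D}\mathbb{B}$-valued model is $\mathcal{M}=(D_0,D_1)$ with $D_0\ne\emptyset$,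 $D_1=\bigcup_{n\ge1}D_1^{(n)}$, each $D_1^{(n)}$ a nonempty set of functions $\alpha:D_0^n\to{\tt D}\mathbb{B}$; elements of $D_0$ are individual constants, each $\alpha\in D_1^{(n)}$ gives a relation constant $\bar\alpha$, and $\mathcal{M}(A)\in{\tt D}\mathbb{B}$ is defined by $\mathcal{M}(\bar\alpha(t_1,\dots,t_n))=\alpha(t_1,\dots,t_n)$, $\mathcal{M}(\lnot F)=-\mathcal{M}(F)$, $\mathcal{M}(F_0\lor F_1)=\sup_<$, $\mathcal{M}(F_0\land F_1)=\inf_<$, $\mathcal{M}(\exists xF)=\sup_<\{\mathcal{M}(F(t)):t\in D_0\}$, $\mathcal{M}(\forall xF)=\inf_<\{\cdots\}$, $\mathcal{M}(\exists X^nF)=\sup_<\{\mathcal{M}(F(\bar\alpha)):\alpha\in D_1^{(n)}\}$, $\mathcal{M}(\forall X^nF)=\inf_<\{\cdots\}$, and $\mathcal{M}(\lambda\vec x.G)(t_1,\dots,t_n)=\mathcal{M}(G(t_1,\dots,t_n))$. $\mathcal{M}\models 3CA$ means: for every formula $G(x_1,\dots,x_n,X^k)$ and every $\beta\in D_1^{(k)}$ there is $\alpha\in D_1^{(n)}$ with $\alpha\unlhd\mathcal{M}(\lambda\vec x.G(x_1,\dots,x_n,\bar\beta))$. *)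

(* Defs.v *)
From HB Require Import structures.
From mathcomp Require Import all_boot all_order.
Set Implicit Arguments. Unset Strict Implicit. Unset Printing Implicit Defensive.
Import Order.Theory.
Local Open Scope order_scope.

Section CBA.
Context {disp : Order.disp_t} (B : ctbDistrLatticeType disp).

Definition is_sup (S : B -> Prop) (s : B) : Prop :=
  (forall x, S x -> x <= s) /\ (forall u, (forall x, S x -> x <= u) -> s <= u).

Record completeness := Completeness {
  csup : (B -> Prop) -> B;
  csupP : forall S, is_sup S (csup S) }.

Variable cB : completeness.

Definition cinf (S : B -> Prop) : B := csup cB (fun x => forall y, S y -> x <= y).

Lemma cinf_lb S y : S y -> cinf S <= y.
Proof. by move=> Sy; apply: (proj2 (csupP cB _)) => x Hx; apply: Hx. Qed.

Lemma cinf_glb S u : (forall y, S y -> u <= y) -> u <= cinf S.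
Proof. by move=> H; apply: (proj1 (csupP cB _)). Qed.

Definition DB := {p : (B * B)%type | p.1 <= p.2}.
Definition box (a : DB) : B := (sval a).1.
Definition dia (a : DB) : B := (sval a).2.
Lemma box_le_dia (a : DB) : box a <= dia a.
Proof. exact: (svalP a). Qed.

Definition trile (a b : DB) : Prop := box a <= box b /\ dia b <= dia a.

Lemma negDB_ok (a : DB) : ~` dia a <= ~` box a.
Proof. by rewrite leC box_le_dia. Qed.

Definition negDB (a : DB) : DB :=
  exist (fun p : (B * B)%type => p.1 <= p.2) (~` dia a, ~` box a) (negDB_ok a).

Definition boxes (S : DB -> Prop) : B -> Prop := fun x => exists a, S a /\ box a = x.
Definition dias (S : DB -> Prop) : B -> Prop := fun x => exists a, S a /\ dia a = x.

Lemma supDB_ok (S : DB -> Prop) : csup cB (boxes S) <= csup cB (dias S).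
Proof.
apply: (proj2 (csupP cB _)) => x [a [Sa <-]].
apply: le_trans (box_le_dia a) _; apply: (proj1 (csupP cB _)); by exists a.
Qed.

Lemma infDB_ok (S : DB -> Prop) : cinf (boxes S) <= cinf (dias S).
Proof.
apply: cinf_glb => y [a [Sa <-]].
apply: le_trans (box_le_dia a); apply: cinf_lb; by exists a.
Qed.

Definition supDB (S : DB -> Prop) : DB :=
  exist (fun p : (B * B)%type => p.1 <= p.2) (csup cB (boxes S), csup cB (dias S)) (supDB_ok S).
Definition infDB (S : DB -> Prop) : DB :=
  exist (fun p : (B * B)%type => p.1 <= p.2) (cinf (boxes S), cinf (dias S)) (infDB_ok S).

Definition pair2 (a b : DB) : DB -> Prop := fun c => c = a \/ c = b.

Definition botDB : DB :=
  exist (fun p : (B * B)%type => p.1 <= p.2) (\bot, \top) (le0x \top).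

End CBA.

(* Syntax (locally nameless).                                           *)
(*  - first-order bound variables: de Bruijn indices IB i;              *)
(*    free variables / individual constants: IC c  (c : C)              *)
(*  - second-order bound variables of arity n: PB i, a de Bruijn index  *)
(*    counting only the enclosing second-order binders of arity n;      *)
(*    free second-order variables / relation constants: PC k (k : K n)  *)
Inductive iterm (C : Type) : Type := IB of nat | IC of C.
Arguments IB {C}. Arguments IC {C}.

Inductive patom (K : nat -> Type) (n : nat) : Type := PB of nat | PC of K n.
Arguments PB {K n}. Arguments PC {K n}.

Inductive fm (C : Type) (K : nat -> Type) : Type :=
| FAtom (n : nat) (p : patom K n) (ts : n.-tuple (iterm C))
| FNot (F : fm C K)
| FOr (F0 F1 : fm C K)
| FAnd (F0 F1 : fm C K)
| FEx1 (F : fm C K)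
| FAll1 (F : fm C K)
| FEx2 (n : nat) (F : fm C K)
| FAll2 (n : nat) (F : fm C K).
Arguments FAtom {C K n}. Arguments FNot {C K}. Arguments FOr {C K}.
Arguments FAnd {C K}. Arguments FEx1 {C K}. Arguments FAll1 {C K}.
Arguments FEx2 {C K}. Arguments FAll2 {C K}.

Section Syntax.
Variables (C : Type) (K : nat -> Type).

Definition iterm_lift (t : iterm C) : iterm C :=
  match t with IB i => IB i.+1 | IC c => IC c end.
Definition up (s : nat -> iterm C) : nat -> iterm C :=
  fun i => match i with 0 => IB 0 | j.+1 => iterm_lift (s j) end.
Definition iterm_subst (s : nat -> iterm C) (t : iterm C) : iterm C :=
  match t with IB i => s i | IC c => IC c end.

Fixpoint fsubst (s : nat -> iterm C) (F : fm C K) : fm C K :=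
  match F with
  | FAtom n p ts => FAtom p (map_tuple (iterm_subst s) ts)
  | FNot F => FNot (fsubst s F)
  | FOr F0 F1 => FOr (fsubst s F0) (fsubst s F1)
  | FAnd F0 F1 => FAnd (fsubst s F0) (fsubst s F1)
  | FEx1 F => FEx1 (fsubst (up s) F)
  | FAll1 F => FAll1 (fsubst (up s) F)
  | FEx2 n F => FEx2 n (fsubst s F)
  | FAll2 n F => FAll2 n (fsubst s F)
  end.

Definition fopen (t : C) (F : fm C K) : fm C K :=
  fsubst (fun i => match i with 0 => IC t | j.+1 => IB j end) F.

(* An n-ary abstract  \x1..xn.G  is represented by its body G, in which
   x_(i+1) is the dangling index i.  inst G ts = G(t_1,...,t_n). *)
Definition inst (G : fm C K) (ts : seq (iterm C)) : fm C K :=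
  fsubst (fun i => nth (IB 0) ts i) G.

(* F(T) for the body F of a second-order quantifier of arity m
   (k = number of enclosing arity-m binders passed so far) *)
Fixpoint sopen (m k : nat) (T : fm C K) (F : fm C K) : fm C K :=
  match F with
  | FAtom n p ts =>
      match p with
      | PB i => if n == m then
                  (if i == k then inst T ts
                   else if k < i then FAtom (@PB K n i.-1) ts else FAtom (@PB K n i) ts)
                else FAtom p ts
      | PC _ => FAtom p ts
      end
  | FNot F => FNot (sopen m k T F)
  | FOr F0 F1 => FOr (sopen m k T F0) (sopen m k T F1)
  | FAnd F0 F1 => FAnd (sopen m k T F0) (sopen m k T F1)
  | FEx1 F => FEx1 (sopen m k T F)
  | FAll1 F => FAll1 (sopen m k T F)
  | FEx2 n F => FEx2 n (sopen m (if n == m then k.+1 else k) T F)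
  | FAll2 n F => FAll2 n (sopen m (if n == m then k.+1 else k) T F)
  end.

Fixpoint ssubst (th : forall n, K n -> fm C K) (F : fm C K) : fm C K :=
  match F with
  | FAtom n p ts =>
      match p with PC j => inst (th n j) ts | PB _ => FAtom p ts end
  | FNot F => FNot (ssubst th F)
  | FOr F0 F1 => FOr (ssubst th F0) (ssubst th F1)
  | FAnd F0 F1 => FAnd (ssubst th F0) (ssubst th F1)
  | FEx1 F => FEx1 (ssubst th F)
  | FAll1 F => FAll1 (ssubst th F)
  | FEx2 n F => FEx2 n (ssubst th F)
  | FAll2 n F => FAll2 n (ssubst th F)
  end.

(* local closure: dangling first-order indices < d1, dangling second-order
   indices of arity n < d2 n; all second-order arities are >= 1 *)
Definition iterm_lc (d1 : nat) (t : iterm C) : bool :=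
  match t with IB i => i < d1 | IC _ => true end.

Fixpoint lcf (d1 : nat) (d2 : nat -> nat) (F : fm C K) : Prop :=
  match F with
  | FAtom n p ts =>
      0 < n /\ all (iterm_lc d1) ts /\
      (match p with PB i => i < d2 n | PC _ => true end)
  | FNot F => lcf d1 d2 F
  | FOr F0 F1 => lcf d1 d2 F0 /\ lcf d1 d2 F1
  | FAnd F0 F1 => lcf d1 d2 F0 /\ lcf d1 d2 F1
  | FEx1 F => lcf d1.+1 d2 F
  | FAll1 F => lcf d1.+1 d2 F
  | FEx2 m F => 0 < m /\ lcf d1 (fun n => if n == m then (d2 n).+1 else d2 n) F
  | FAll2 m F => 0 < m /\ lcf d1 (fun n => if n == m then (d2 n).+1 else d2 n) F
  end.

End Syntax.

(* renaming of constants (used for F(alpha_1,...,alpha_k)) *)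
Section Map.
Variables (C C' : Type) (K K' : nat -> Type).
Variables (f : C -> C') (g : forall n, K n -> K' n).
Definition iterm_map (t : iterm C) : iterm C' :=
  match t with IB i => IB i | IC c => IC (f c) end.
Definition patom_map n (p : patom K n) : patom K' n :=
  match p with PB i => PB i | PC k => PC (g k) end.
Fixpoint fm_map (F : fm C K) : fm C' K' :=
  match F with
  | FAtom n p ts => FAtom (patom_map p) (map_tuple iterm_map ts)
  | FNot F => FNot (fm_map F)
  | FOr F0 F1 => FOr (fm_map F0) (fm_map F1)
  | FAnd F0 F1 => FAnd (fm_map F0) (fm_map F1)
  | FEx1 F => FEx1 (fm_map F)
  | FAll1 F => FAll1 (fm_map F)
  | FEx2 n F => FEx2 n (fm_map F)
  | FAll2 n F => FAll2 n (fm_map F)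
  end.
End Map.

(* The base language: Tm_0 = variables (names : nat); free second-order *)
(* variables of arity n are names : nat.                                *)
Definition Tm0 := nat.
Definition formula := fm Tm0 (fun _ : nat => nat).
Definition is_formula (F : formula) : Prop := lcf 0 (fun _ => 0) F.
Definition is_abs (n : nat) (T : formula) : Prop := 0 < n /\ lcf n (fun _ => 0) T.

Section Valuation.
Context {disp : Order.disp_t} (B : ctbDistrLatticeType disp) (cB : completeness B).

Definition semi_valuation (V : formula -> DB B) : Prop :=
  (forall F, is_formula (FNot F) -> trile (V (FNot F)) (negDB (V F))) /\
  (forall F0 F1, is_formula (FOr F0 F1) ->
     trile (V (FOr F0 F1)) (supDB cB (pair2 (V F0) (V F1)))) /\
  (forall F0 F1, is_formula (FAnd F0 F1) ->
     trile (V (FAnd F0 F1)) (infDB cB (pair2 (V F0) (V F1)))) /\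
  (forall F, is_formula (FEx1 F) ->
     trile (V (FEx1 F)) (supDB cB (fun a => exists t : Tm0, a = V (fopen t F)))) /\
  (forall F, is_formula (FAll1 F) ->
     trile (V (FAll1 F)) (infDB cB (fun a => exists t : Tm0, a = V (fopen t F)))) /\
  (forall n F, is_formula (FEx2 n F) ->
     trile (V (FEx2 n F))
       (supDB cB (fun a => exists T, is_abs n T /\ a = V (sopen n 0 T F)))) /\
  (forall n F, is_formula (FAll2 n F) ->
     trile (V (FAll2 n F))
       (infDB cB (fun a => exists T, is_abs n T /\ a = V (sopen n 0 T F)))).

Definition Vabs (V : formula -> DB B) (n : nat) (T : formula) : n.-tuple Tm0 -> DB B :=
  fun ts => V (inst T (map IC ts)).

Record model := Model {
  mD0 : Type;
  md0 : mD0;                                    (* D_0 is nonempty *)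
  mD1 : forall n, (n.-tuple mD0 -> DB B) -> Prop
}.

Arguments mD0 _ : clear implicits.
Arguments md0 _ : clear implicits.
Arguments mD1 _ _ _ : clear implicits.

(* relation constants: functions D_0^n -> DB *)
Definition Krel (D0 : Type) : nat -> Type := fun n => n.-tuple D0 -> DB B.

Definition scons (D0 : Type) (t : D0) (r : nat -> D0) : nat -> D0 :=
  fun i => match i with 0 => t | j.+1 => r j end.

Definition push (D0 : Type) (m : nat) (al : m.-tuple D0 -> DB B)
    (r : forall n, nat -> Krel D0 n) : forall n, nat -> Krel D0 n :=
  fun n i =>
    match @eqP _ m n with
    | ReflectT e => match i with
                    | 0 => eq_rect m (fun k => Krel D0 k) al n e
                    | j.+1 => r n j end
    | ReflectF _ => r n i
    end.

Variable M : model.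

Definition term_val (r1 : nat -> mD0 M) (t : iterm (mD0 M)) : mD0 M :=
  match t with IB i => r1 i | IC c => c end.
Definition rel_val (r2 : forall n, nat -> Krel (mD0 M) n) n (p : patom (Krel (mD0 M)) n)
  : Krel (mD0 M) n :=
  match p with PB i => r2 n i | PC al => al end.

(* The value M(F); the environments r1, r2 give the values of dangling bound
   variables, so that Meval r1 r2 F = M(F(r1,r2)) (opening by constants).
   On sentences the environments are irrelevant. *)
Fixpoint Meval (r1 : nat -> mD0 M) (r2 : forall n, nat -> Krel (mD0 M) n)
    (F : fm (mD0 M) (Krel (mD0 M))) : DB B :=
  match F with
  | FAtom n p ts => rel_val r2 p (map_tuple (term_val r1) ts)
  | FNot F => negDB (Meval r1 r2 F)
  | FOr F0 F1 => supDB cB (pair2 (Meval r1 r2 F0) (Meval r1 r2 F1))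
  | FAnd F0 F1 => infDB cB (pair2 (Meval r1 r2 F0) (Meval r1 r2 F1))
  | FEx1 F => supDB cB (fun a => exists t : mD0 M, a = Meval (scons t r1) r2 F)
  | FAll1 F => infDB cB (fun a => exists t : mD0 M, a = Meval (scons t r1) r2 F)
  | FEx2 m F => supDB cB (fun a => exists al, mD1 M m al /\ a = Meval r1 (push al r2) F)
  | FAll2 m F => infDB cB (fun a => exists al, mD1 M m al /\ a = Meval r1 (push al r2) F)
  end.

Definition env2_default : forall n, nat -> Krel (mD0 M) n := fun n _ _ => botDB B.

Definition Mval (F : fm (mD0 M) (Krel (mD0 M))) : DB B :=
  Meval (fun _ => md0 M) env2_default F.

Definition pure_formula := fm Empty_set (fun _ : nat => Empty_set).
Definition embed (G : pure_formula) : fm (mD0 M) (Krel (mD0 M)) :=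
  fm_map (fun c : Empty_set => match c with end)
         (fun n (k : Empty_set) => match k with end) G.

(* M |= 3CA: for every formula G(x_1,...,x_n,X^k) (x_(i+1) = dangling
   first-order index i, X^k = dangling second-order index 0 of arity k)
   and every beta in D_1^(k) there is alpha in D_1^(n) with
   alpha <| M(\x.G(x,beta)), i.e. alpha(ts) <| M(G(ts,beta)) for all ts. *)
Definition models_3CA : Prop :=
  forall (n k : nat) (G : pure_formula),
    0 < n -> 0 < k ->
    lcf n (fun m => if m == k then 1 else 0) G ->
    forall beta, mD1 M k beta ->
    exists al, mD1 M n al /\
      forall ts : n.-tuple (mD0 M),
        trile (al ts) (Meval (fun i => nth (md0 M) ts i) (push beta env2_default) (embed G)).

End Valuation.

Definition canon_model {disp : Order.disp_t} (B : ctbDistrLatticeType disp)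
    (V : formula -> DB B) : model B :=
  {| mD0 := Tm0; md0 := 0%N;
     mD1 := fun n al => exists T, is_abs n T /\ al = Vabs V T |}.

Arguments Mval {disp B} cB M F.
Arguments Meval {disp B} cB M r1 r2 F.
Arguments models_3CA {disp B} cB M.

(* Main.v *)
Require Import Defs.
From mathcomp Require Import all_boot all_order.
From Stdlib Require Import FunctionalExtensionality PropExtensionality.
Set Implicit Arguments. Unset Strict Implicit. Unset Printing Implicit Defensive.
Import Order.Theory.

Section DBlemmas.
Context {disp : Order.disp_t} (B : ctbDistrLatticeType disp) (cB : completeness B).
Local Open Scope order_scope.

Lemma trile_refl (a : DB B) : trile a a.
Proof. by split. Qed.
Lemma trile_trans (a b c : DB B) : trile a b -> trile b c -> trile a c.
Proof. move=> [h1 h2] [h3 h4]; split; [exact: le_trans h1 h3 | exact: le_trans h4 h2]. Qed.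
Lemma trile_neg (a b : DB B) : trile a b -> trile (negDB a) (negDB b).
Proof. by move=> [h1 h2]; split; rewrite /box /dia /= leC. Qed.

Lemma csup_ub (S : B -> Prop) x : S x -> x <= csup cB S.
Proof. exact: (proj1 (csupP cB S)). Qed.
Lemma csup_least (S : B -> Prop) u : (forall x, S x -> x <= u) -> csup cB S <= u.
Proof. exact: (proj2 (csupP cB S)). Qed.

Lemma supDB_mono (S S' : DB B -> Prop) :
  (forall a, S a -> exists b, S' b /\ trile a b) ->
  (forall b, S' b -> exists a, S a /\ trile a b) ->
  trile (supDB cB S) (supDB cB S').
Proof.
move=> H1 H2; split; rewrite /box /dia /=.
- apply: csup_least => x [a [Sa <-]]. have [b [S'b [h _]]] := H1 a Sa.
  apply: le_trans h _; apply: csup_ub; by exists b.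
- apply: csup_least => x [b [S'b <-]]. have [a [Sa [_ h]]] := H2 b S'b.
  apply: le_trans h _; apply: csup_ub; by exists a.
Qed.

Lemma infDB_mono (S S' : DB B -> Prop) :
  (forall a, S a -> exists b, S' b /\ trile a b) ->
  (forall b, S' b -> exists a, S a /\ trile a b) ->
  trile (infDB cB S) (infDB cB S').
Proof.
move=> H1 H2; split; rewrite /box /dia /=.
- apply: cinf_glb => y [b [S'b <-]]. have [a [Sa [h _]]] := H2 b S'b.
  apply: le_trans _ h; apply: cinf_lb; by exists a.
- apply: cinf_glb => y [a [Sa <-]]. have [b [S'b [_ h]]] := H1 a Sa.
  apply: le_trans _ h; apply: cinf_lb; by exists b.
Qed.

Lemma pair2_mono (a0 a1 b0 b1 : DB B) : trile a0 b0 -> trile a1 b1 ->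
  (forall a, pair2 a0 a1 a -> exists b, pair2 b0 b1 b /\ trile a b) /\
  (forall b, pair2 b0 b1 b -> exists a, pair2 a0 a1 a /\ trile a b).
Proof.
move=> h0 h1; split.
- move=> a [->|->]; [exists b0 | exists b1]; split => //; rewrite /pair2; auto.
- move=> b [->|->]; [exists a0 | exists a1]; split => //; rewrite /pair2; auto.
Qed.

Lemma supDB_ext (S S' : DB B -> Prop) : (forall a, S a <-> S' a) -> supDB cB S = supDB cB S'.
Proof.
move=> H; have -> //: S = S'.
by apply: functional_extensionality => a; apply: propositional_extensionality.
Qed.
Lemma infDB_ext (S S' : DB B -> Prop) : (forall a, S a <-> S' a) -> infDB cB S = infDB cB S'.
Proof.
move=> H; have -> //: S = S'.
by apply: functional_extensionality => a; apply: propositional_extensionality.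
Qed.

End DBlemmas.

Section SyntaxLemmas.
Variables (C : Type) (K : nat -> Type).
Implicit Types (s : nat -> iterm C) (F G : fm C K).

Lemma map_ext_all (A A' : Type) (P : pred A) (f g : A -> A') (l : seq A) :
  all P l -> (forall x, P x -> f x = g x) -> map f l = map g l.
Proof. by elim: l => //= x l IH /andP[hx hl] H; rewrite H // IH. Qed.

Lemma all_ext (A : Type) (P Q : pred A) (l : seq A) :
  all P l -> (forall x, P x -> Q x) -> all Q l.
Proof. by elim: l => //= x l IH /andP[hx hl] H; rewrite H // IH. Qed.

Fixpoint fsize F : nat :=
  match F with
  | FAtom _ _ _ => 0
  | FNot F => (fsize F).+1
  | FOr F0 F1 | FAnd F0 F1 => (fsize F0 + fsize F1).+1
  | FEx1 F | FAll1 F | FEx2 _ F | FAll2 _ F => (fsize F).+1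
  end.

Lemma fsize_fsubst s F : fsize (fsubst s F) = fsize F.
Proof. by elim: F s => //= *; congruence. Qed.

Lemma fsubst_ext_lc e d2 F s s' : lcf e d2 F -> (forall i, i < e -> s i = s' i) ->
  fsubst s F = fsubst s' F.
Proof.
elim: F e d2 s s' => /=.
- move=> n p ts e d2 s s' [_ [Hall _]] H; congr FAtom; apply: val_inj => /=.
  apply: (map_ext_all Hall) => t.
  by case: t => //= i hi; rewrite H.
- by move=> F IH e d2 s s' h H; rewrite (IH _ _ _ _ h H).
- by move=> F0 IH0 F1 IH1 e d2 s s' [h0 h1] H; rewrite (IH0 _ _ _ _ h0 H) (IH1 _ _ _ _ h1 H).
- by move=> F0 IH0 F1 IH1 e d2 s s' [h0 h1] H; rewrite (IH0 _ _ _ _ h0 H) (IH1 _ _ _ _ h1 H).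
- move=> F IH e d2 s s' h H; rewrite (IH _ _ _ (up s') h) //.
  by case=> //= i hi; rewrite H.
- move=> F IH e d2 s s' h H; rewrite (IH _ _ _ (up s') h) //.
  by case=> //= i hi; rewrite H.
- by move=> m F IH e d2 s s' [_ h] H; rewrite (IH _ _ _ _ h H).
- by move=> m F IH e d2 s s' [_ h] H; rewrite (IH _ _ _ _ h H).
Qed.

Lemma up_comp s s' : up (fun i => iterm_subst s (s' i)) = (fun i => iterm_subst (up s) (up s' i)).
Proof. by apply: functional_extensionality => -[|i] //=; case: (s' i). Qed.

Lemma fsubst_comp s s' F : fsubst s (fsubst s' F) = fsubst (fun i => iterm_subst s (s' i)) F.
Proof.
elim: F s s' => /=.
- move=> n p ts s s'; congr FAtom; apply: val_inj => /=.
  by rewrite -map_comp; apply: eq_map => -[].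
- by move=> F IH s s'; rewrite IH.
- by move=> F0 IH0 F1 IH1 s s'; rewrite IH0 IH1.
- by move=> F0 IH0 F1 IH1 s s'; rewrite IH0 IH1.
- by move=> F IH s s'; rewrite IH up_comp.
- by move=> F IH s s'; rewrite IH up_comp.
- by move=> m F IH s s'; rewrite IH.
- by move=> m F IH s s'; rewrite IH.
Qed.

Lemma fsubst_inst m d2 (T : fm C K) (ts : seq (iterm C)) s : lcf m d2 T -> size ts = m ->
  fsubst s (inst T ts) = inst T (map (iterm_subst s) ts).
Proof.
move=> hT hs; rewrite /inst fsubst_comp; apply: fsubst_ext_lc hT _ => i hi.
by rewrite (nth_map (IB 0)) // hs.
Qed.

Lemma lcf_mono2 d1 d2 d2' F : lcf d1 d2 F -> (forall n, d2 n <= d2' n) -> lcf d1 d2' F.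
Proof.
elim: F d1 d2 d2' => /=.
- move=> n p ts d1 d2 d2' [h1 [h2 h3]] H; do 2 split => //.
  by case: p h3 => // i hi; apply: leq_trans hi (H n).
- by move=> F IH d1 d2 d2' h H; apply: IH h H.
- by move=> F0 IH0 F1 IH1 d1 d2 d2' [h0 h1] H; split; [apply: IH0 h0 H | apply: IH1 h1 H].
- by move=> F0 IH0 F1 IH1 d1 d2 d2' [h0 h1] H; split; [apply: IH0 h0 H | apply: IH1 h1 H].
- by move=> F IH d1 d2 d2' h H; apply: IH h H.
- by move=> F IH d1 d2 d2' h H; apply: IH h H.
- move=> m F IH d1 d2 d2' [hm h] H; split => //; apply: IH h _ => n.
  by case: (n == m); rewrite ?ltnS.
- move=> m F IH d1 d2 d2' [hm h] H; split => //; apply: IH h _ => n.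
  by case: (n == m); rewrite ?ltnS.
Qed.

Lemma lcf_fsubst e d1 d2 F s : lcf e d2 F -> (forall i, i < e -> iterm_lc d1 (s i)) ->
  lcf d1 d2 (fsubst s F).
Proof.
elim: F e d1 d2 s => /=.
- move=> n p ts e d1 d2 s [h1 [h2 h3]] H; do 2 split => //.
  rewrite all_map; apply: (all_ext h2) => t.
  by case: t => //= i hi; apply: H.
- by move=> F IH e d1 d2 s h H; apply: IH h H.
- by move=> F0 IH0 F1 IH1 e d1 d2 s [h0 h1] H; split; [apply: IH0 h0 H | apply: IH1 h1 H].
- by move=> F0 IH0 F1 IH1 e d1 d2 s [h0 h1] H; split; [apply: IH0 h0 H | apply: IH1 h1 H].
- move=> F IH e d1 d2 s h H; apply: IH h _ => -[|i] //= hi.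
  by have := H i hi; case: (s i).
- move=> F IH e d1 d2 s h H; apply: IH h _ => -[|i] //= hi.
  by have := H i hi; case: (s i).
- by move=> m F IH e d1 d2 s [hm h] H; split => //; apply: IH h H.
- by move=> m F IH e d1 d2 s [hm h] H; split => //; apply: IH h H.
Qed.

End SyntaxLemmas.
Section SopenLemmas.
Variables (C : Type) (K : nat -> Type).
Implicit Types (s : nat -> iterm C) (F G T : fm C K).

Lemma sopen_fsubst_closed e d2 G m k T s : lcf e d2 G -> d2 m <= k ->
  sopen m k T (fsubst s G) = fsubst s G.
Proof.
elim: G e d2 k s => /=.
- move=> n p ts e d2 k s [_ [_ h3]] H; case: p h3 => //= i hi.
  case: eqP => [e'|] //; subst.
  have hik : i < k by apply: leq_trans hi H.
  by rewrite (ltn_eqF hik); case: ifP => // hki; move: (ltn_trans hik hki); rewrite ltnn.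
- by move=> F IH e d2 k s h H; rewrite (IH _ _ _ _ h H).
- by move=> F0 IH0 F1 IH1 e d2 k s [h0 h1] H; rewrite (IH0 _ _ _ _ h0 H) (IH1 _ _ _ _ h1 H).
- by move=> F0 IH0 F1 IH1 e d2 k s [h0 h1] H; rewrite (IH0 _ _ _ _ h0 H) (IH1 _ _ _ _ h1 H).
- by move=> F IH e d2 k s h H; rewrite (IH _ _ _ _ h H).
- by move=> F IH e d2 k s h H; rewrite (IH _ _ _ _ h H).
- move=> n F IH e d2 k s [_ h] H; rewrite (IH _ _ _ _ h) //.
  by rewrite (eq_sym m n); case: (n == m); rewrite ?ltnS.
- move=> n F IH e d2 k s [_ h] H; rewrite (IH _ _ _ _ h) //.
  by rewrite (eq_sym m n); case: (n == m); rewrite ?ltnS.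
Qed.

Lemma sopen_fsubst d2' G m k T s : lcf m d2' T ->
  sopen m k T (fsubst s G) = fsubst s (sopen m k T G).
Proof.
move=> hT; elim: G k s => /=.
- move=> n p ts k s; case: p => //= i.
  case: eqP => [e|] //=; subst.
  case: eqP => [_|] //=; last by case: ifP.
  by rewrite (fsubst_inst s hT) ?size_tuple.
- by move=> F IH k s; rewrite IH.
- by move=> F0 IH0 F1 IH1 k s; rewrite IH0 IH1.
- by move=> F0 IH0 F1 IH1 k s; rewrite IH0 IH1.
- by move=> F IH k s; rewrite IH.
- by move=> F IH k s; rewrite IH.
- by move=> n F IH k s; rewrite IH.
- by move=> n F IH k s; rewrite IH.
Qed.

End SopenLemmas.
From mathcomp Require Import zify.

Definition thok (th : forall n : nat, nat -> formula) :=
  forall n j, 0 < n -> is_abs n (th n j).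

Fixpoint sname (m k j : nat) (F : formula) : formula :=
  match F with
  | FAtom n p ts =>
      match p with
      | PB i => if n == m then
                  (if i == k then FAtom (@PC _ n j) ts
                   else if k < i then FAtom (@PB (fun _ => nat) n i.-1) ts
                   else FAtom (@PB (fun _ => nat) n i) ts)
                else FAtom p ts
      | PC _ => FAtom p ts
      end
  | FNot F => FNot (sname m k j F)
  | FOr F0 F1 => FOr (sname m k j F0) (sname m k j F1)
  | FAnd F0 F1 => FAnd (sname m k j F0) (sname m k j F1)
  | FEx1 F => FEx1 (sname m k j F)
  | FAll1 F => FAll1 (sname m k j F)
  | FEx2 n F => FEx2 n (sname m (if n == m then k.+1 else k) j F)
  | FAll2 n F => FAll2 n (sname m (if n == m then k.+1 else k) j F)
  end.

Fixpoint fresh (j : nat) (F : formula) : Prop :=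
  match F with
  | FAtom n p ts => match p with PC j' => (j' : nat) < j | PB _ => True end
  | FNot F => fresh j F
  | FOr F0 F1 | FAnd F0 F1 => fresh j F0 /\ fresh j F1
  | FEx1 F | FAll1 F | FEx2 _ F | FAll2 _ F => fresh j F
  end.

Fixpoint maxname (F : formula) : nat :=
  match F with
  | FAtom n p ts => match p with PC j' => (j' : nat).+1 | PB _ => 0 end
  | FNot F => maxname F
  | FOr F0 F1 | FAnd F0 F1 => maxn (maxname F0) (maxname F1)
  | FEx1 F | FAll1 F | FEx2 _ F | FAll2 _ F => maxname F
  end.

Lemma fresh_mono j j' F : j <= j' -> fresh j F -> fresh j' F.
Proof.
move=> hj; elim: F => /=.
- by move=> n [i|c] ts //= h; apply: leq_trans h hj.
all: try by move=> *; intuition.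
Qed.

Lemma fresh_maxname F : fresh (maxname F) F.
Proof.
elim: F => /=.
- by move=> n [i|c] ts.
all: try by move=> *; intuition.
- by move=> F0 h0 F1 h1; split; [apply: fresh_mono h0; apply: leq_maxl | apply: fresh_mono h1; apply: leq_maxr].
- by move=> F0 h0 F1 h1; split; [apply: fresh_mono h0; apply: leq_maxl | apply: fresh_mono h1; apply: leq_maxr].
Qed.

Lemma fresh_fsubst j s F : fresh j F -> fresh j (fsubst s F).
Proof. by elim: F s => /=; try by move=> *; intuition. Qed.

Lemma fsize_sname m k j F : fsize (sname m k j F) = fsize F.
Proof.
elim: F k => /=; try by move=> *; congruence.
move=> n [i|c] ts k //=; case: eqP => // _; case: eqP => // _; by case: ifP.
Qed.

Lemma ssubst_nonames th F : fresh 0 F -> ssubst th F = F.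
Proof.
elim: F => /=.
- by move=> n [i|c] ts.
all: by move=> *; intuition congruence.
Qed.

Lemma nth_lc d1 (ts : seq (iterm Tm0)) i : all (iterm_lc d1) ts -> i < size ts ->
  iterm_lc d1 (nth (IB 0) ts i).
Proof. by move=> /(all_nthP (IB 0)) H; apply: H. Qed.

Lemma lcf_ssubst th d1 d2 F : thok th -> lcf d1 d2 F -> lcf d1 d2 (ssubst th F).
Proof.
move=> hth; elim: F d1 d2 => /=.
- move=> n [i|j] ts d1 d2 //= [hn [h2 h3]].
  have [_ hT] := hth n j hn.
  apply: (@lcf_mono2 _ _ _ (fun _ => 0)) => //.
  apply: lcf_fsubst hT _ => i hi; apply: nth_lc h2 _; by rewrite size_tuple.
- by move=> F IH d1 d2 h; apply: IH.
- by move=> F0 IH0 F1 IH1 d1 d2 [h0 h1]; split; [apply: IH0 | apply: IH1].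
- by move=> F0 IH0 F1 IH1 d1 d2 [h0 h1]; split; [apply: IH0 | apply: IH1].
- by move=> F IH d1 d2 h; apply: IH.
- by move=> F IH d1 d2 h; apply: IH.
- by move=> m F IH d1 d2 [hm h]; split => //; apply: IH.
- by move=> m F IH d1 d2 [hm h]; split => //; apply: IH.
Qed.

Lemma fsubst_ssubst th d1 d2 F s : thok th -> lcf d1 d2 F ->
  fsubst s (ssubst th F) = ssubst th (fsubst s F).
Proof.
move=> hth; elim: F d1 d2 s => /=.
- move=> n [i|j] ts d1 d2 s //= [hn _].
  have [_ hT] := hth n j hn.
  by rewrite (fsubst_inst s hT) ?size_tuple.
- by move=> F IH d1 d2 s h; rewrite (IH _ _ _ h).
- by move=> F0 IH0 F1 IH1 d1 d2 s [h0 h1]; rewrite (IH0 _ _ _ h0) (IH1 _ _ _ h1).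
- by move=> F0 IH0 F1 IH1 d1 d2 s [h0 h1]; rewrite (IH0 _ _ _ h0) (IH1 _ _ _ h1).
- by move=> F IH d1 d2 s h; rewrite (IH _ _ _ h).
- by move=> F IH d1 d2 s h; rewrite (IH _ _ _ h).
- by move=> m F IH d1 d2 s [_ h]; rewrite (IH _ _ _ h).
- by move=> m F IH d1 d2 s [_ h]; rewrite (IH _ _ _ h).
Qed.

Lemma lcf_sname n k j d1 d2 F : lcf d1 d2 F -> k < d2 n ->
  lcf d1 (fun m => if m == n then (d2 m).-1 else d2 m) (sname n k j F).
Proof.
elim: F k d1 d2 => /=.
- move=> n' [i|c] ts k d1 d2 [hn [h2 h3]] hk //=.
  case: eqP => [e|ne] /=; last by rewrite (introF eqP ne).
  subst n'; rewrite ?eqxx.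
  move: h3; rewrite ?ltEnat /= => h3.
  case: eqP => [_|ne] //=; case: ifP => /= hki; split => //; split => //; rewrite ?ltEnat /= ?eqxx; lia.
- by move=> F IH k d1 d2 h hk; apply: IH.
- by move=> F0 IH0 F1 IH1 k d1 d2 [h0 h1] hk; split; [apply: IH0 | apply: IH1].
- by move=> F0 IH0 F1 IH1 k d1 d2 [h0 h1] hk; split; [apply: IH0 | apply: IH1].
- by move=> F IH k d1 d2 h hk; apply: IH.
- by move=> F IH k d1 d2 h hk; apply: IH.
- move=> m F IH k d1 d2 [hm h] hk; split => //.
  have := IH (if m == n then k.+1 else k) _ _ h.
  rewrite (eq_sym n m); case: eqP => [e|ne].
  + subst m; move=> /(_ hk) H; apply: lcf_mono2 H _ => x.
    by case: eqP => [->|]; lia.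
  + move=> /(_ hk) H; apply: lcf_mono2 H _ => x.
    by case: eqP => [->|]; case: eqP => [->|]; lia.
- move=> m F IH k d1 d2 [hm h] hk; split => //.
  have := IH (if m == n then k.+1 else k) _ _ h.
  rewrite (eq_sym n m); case: eqP => [e|ne].
  + subst m; move=> /(_ hk) H; apply: lcf_mono2 H _ => x.
    by case: eqP => [->|]; lia.
  + move=> /(_ hk) H; apply: lcf_mono2 H _ => x.
    by case: eqP => [->|]; case: eqP => [->|]; lia.
Qed.

Lemma ssubst_sname n j T th th' d1 d2 F k : thok th -> lcf d1 d2 F -> fresh j F ->
  th' n j = T -> (forall m i, i < j -> th' m i = th m i) ->
  ssubst th' (sname n k j F) = sopen n k T (ssubst th F).
Proof.
move=> hth + + hT hth'; elim: F k d1 d2 => /=.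
- move=> n' [i|c] ts k d1 d2 [hn _] hf /=.
  + case: eqP => [e|ne] //=; subst n'.
    by case: eqP => [_|ne] //=; rewrite ?hT //; case: ifP.
  + have [_ hc] := hth n' c hn.
    rewrite hth' //.
    by rewrite (sopen_fsubst_closed _ _ hc).
- by move=> F IH k d1 d2 h hf; rewrite (IH _ _ _ h).
- by move=> F0 IH0 F1 IH1 k d1 d2 [h0 h1] [f0 f1]; rewrite (IH0 _ _ _ h0) // (IH1 _ _ _ h1).
- by move=> F0 IH0 F1 IH1 k d1 d2 [h0 h1] [f0 f1]; rewrite (IH0 _ _ _ h0) // (IH1 _ _ _ h1).
- by move=> F IH k d1 d2 h hf; rewrite (IH _ _ _ h).
- by move=> F IH k d1 d2 h hf; rewrite (IH _ _ _ h).
- by move=> m F IH k d1 d2 [_ h] hf; rewrite (IH _ _ _ h) // (eq_sym m n).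
- by move=> m F IH k d1 d2 [_ h] hf; rewrite (IH _ _ _ h) // (eq_sym m n).
Qed.

Section Semantics.
Context {disp : Order.disp_t} (B : ctbDistrLatticeType disp) (cB : completeness B).

Lemma Meval_fsubst (M : model B) G r1 r2 s :
  Meval cB M r1 r2 (fsubst s G) = Meval cB M (fun i => term_val r1 (s i)) r2 G.
Proof.
elim: G r1 r2 s => /=.
- move=> n p ts r1 r2 s; congr (rel_val _ _); apply: val_inj => /=.
  by rewrite -map_comp; apply: eq_map => -[].
- by move=> F IH r1 r2 s; rewrite IH.
- by move=> F0 IH0 F1 IH1 r1 r2 s; rewrite IH0 IH1.
- by move=> F0 IH0 F1 IH1 r1 r2 s; rewrite IH0 IH1.
- move=> F IH r1 r2 s; apply: supDB_ext => a.
  have E : forall t, Meval cB M (scons t r1) r2 (fsubst (up s) F) =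
     Meval cB M (scons t (fun i => term_val r1 (s i))) r2 F.
    move=> t; rewrite IH; congr Meval; apply: functional_extensionality => -[|i] //=.
    by case: (s i).
  by split => -[t ->]; exists t; rewrite E.
- move=> F IH r1 r2 s; apply: infDB_ext => a.
  have E : forall t, Meval cB M (scons t r1) r2 (fsubst (up s) F) =
     Meval cB M (scons t (fun i => term_val r1 (s i))) r2 F.
    move=> t; rewrite IH; congr Meval; apply: functional_extensionality => -[|i] //=.
    by case: (s i).
  by split => -[t ->]; exists t; rewrite E.
- move=> m F IH r1 r2 s; apply: supDB_ext => a.
  by split => -[al [h ->]]; exists al; rewrite IH.
- move=> m F IH r1 r2 s; apply: infDB_ext => a.
  by split => -[al [h ->]]; exists al; rewrite IH.
Qed.

Lemma fm_map_fsubst (C : Type) (K K' : nat -> Type) (g : forall n, K n -> K' n) s (F : fm C K) :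
  fm_map id g (fsubst s F) = fsubst s (fm_map id g F).
Proof.
have iid : forall t : iterm C, iterm_map id t = t by case.
elim: F s => /=.
- move=> n p ts s; congr FAtom; apply: val_inj => /=.
  by rewrite -!map_comp; apply: eq_map => -[i|c] //=; rewrite iid.
- by move=> F IH s; rewrite IH.
- by move=> F0 IH0 F1 IH1 s; rewrite IH0 IH1.
- by move=> F0 IH0 F1 IH1 s; rewrite IH0 IH1.
- by move=> F IH s; rewrite IH.
- by move=> F IH s; rewrite IH.
- by move=> m F IH s; rewrite IH.
- by move=> m F IH s; rewrite IH.
Qed.

Lemma push_ne (D0 : Type) m (al : m.-tuple D0 -> DB B) r n i : m <> n -> push al r i = r n i.
Proof. by move=> ne; rewrite /push; case: eqP. Qed.
Lemma push_eq0 (D0 : Type) m (al : m.-tuple D0 -> DB B) r : push al r (n:=m) 0 = al.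
Proof. by rewrite /push; case: eqP => // e; rewrite (eq_irrelevance e erefl). Qed.
Lemma push_eqS (D0 : Type) m (al : m.-tuple D0 -> DB B) r i : push al r (n:=m) i.+1 = r m i.
Proof. by rewrite /push; case: eqP. Qed.

End Semantics.

Section Model.
Context {disp : Order.disp_t} (B : ctbDistrLatticeType disp) (cB : completeness B).
Variable V : formula -> DB B.

Definition Rel n k (al : n.-tuple Tm0 -> DB B) (r2 r2' : forall m, nat -> Krel B Tm0 m) : Prop :=
  [/\ (forall i ts, i < k -> r2 n i ts = r2' n i ts),
      (forall ts, r2' n k ts = al ts),
      (forall i ts, k < i -> r2 n i.-1 ts = r2' n i ts) &
      (forall m i ts, m <> n -> r2 m i ts = r2' m i ts)].

Lemma Rel_push n k al r2 r2' m (al' : m.-tuple Tm0 -> DB B) :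
  @Rel n k al r2 r2' -> @Rel n (if m == n then k.+1 else k) al (push al' r2) (push al' r2').
Proof.
case=> h1 h2 h3 h4; case: (eqVneq m n) => [e|ne].
- subst m; split.
  + by move=> [|i] ts hi; rewrite ?push_eq0 ?push_eqS // h1.
  + by move=> ts; rewrite push_eqS h2.
  + move=> [|[|i]] ts //= hi; rewrite !push_eqS; exact: (h3 i.+1).
  + by move=> m' i ts ne; rewrite !push_ne ?h4 //; move=> e; apply: ne.
- split.
  + by move=> i ts hi; rewrite !push_ne ?h1 //; apply/eqP.
  + by move=> ts; rewrite push_ne ?h2 //; apply/eqP.
  + by move=> i ts hi; rewrite !push_ne ?h3 //; apply/eqP.
  + move=> m' i ts ne'; case: (eqVneq m' m) => [e|ne''].
    * subst m'; case: i => [|i]; rewrite ?push_eq0 ?push_eqS //.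
      by rewrite h4.
    * by rewrite !push_ne ?h4 //; apply/eqP; rewrite eq_sym.
Qed.

Lemma Meval_sname n j al (g g' : forall m, nat -> Krel B Tm0 m) F k r1 r2 r2' :
  fresh j F -> (forall ts, g' n j ts = al ts) -> (forall m i ts, i < j -> g' m i ts = g m i ts) ->
  @Rel n k al r2 r2' ->
  Meval cB (canon_model V) r1 r2 (fm_map id g' (sname n k j F)) =
  Meval cB (canon_model V) r1 r2' (fm_map id g F).
Proof.
move=> + hg1 hg2; elim: F k r1 r2 r2' => /=.
- move=> n' [i|c] ts k r1 r2 r2' hf hR /=.
  + case: hR => h1 h2 h3 h4.
    case: eqP => [e|ne] /=; last by rewrite h4.
    subst n'; case: eqP => [->|ne] /=; first by rewrite h2 hg1.
    case: ifP => hki /=; first by rewrite h3.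
    rewrite h1 //; lia.
  + by rewrite hg2.
- by move=> F IH k r1 r2 r2' hf hR; rewrite (IH _ _ _ _ hf hR).
- by move=> F0 IH0 F1 IH1 k r1 r2 r2' [f0 f1] hR; rewrite (IH0 _ _ _ _ f0 hR) (IH1 _ _ _ _ f1 hR).
- by move=> F0 IH0 F1 IH1 k r1 r2 r2' [f0 f1] hR; rewrite (IH0 _ _ _ _ f0 hR) (IH1 _ _ _ _ f1 hR).
- move=> F IH k r1 r2 r2' hf hR; apply: supDB_ext => a.
  by split => -[t ->]; exists t; rewrite (IH _ _ _ _ hf hR).
- move=> F IH k r1 r2 r2' hf hR; apply: infDB_ext => a.
  by split => -[t ->]; exists t; rewrite (IH _ _ _ _ hf hR).
- move=> m F IH k r1 r2 r2' hf hR; apply: supDB_ext => a.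
  by split => -[al' [h ->]]; exists al'; split => //; rewrite (IH _ _ _ _ hf (Rel_push al' hR)).
- move=> m F IH k r1 r2 r2' hf hR; apply: infDB_ext => a.
  by split => -[al' [h ->]]; exists al'; split => //; rewrite (IH _ _ _ _ hf (Rel_push al' hR)).
Qed.

End Model.

Section Main.
Context {disp : Order.disp_t} (B : ctbDistrLatticeType disp) (cB : completeness B).
Variable V : formula -> DB B.

Notation M := (canon_model V).
Notation r0 := (fun _ : nat => 0%N).
Notation gV th := (fun n j => Vabs V (th n j)).

Lemma Rel_top n (al : n.-tuple Tm0 -> DB B) :
  @Rel _ B n 0 al (env2_default (M:=M)) (push al (env2_default (M:=M))).
Proof.
rewrite /Rel; split.
- by [].
- move=> ts. rewrite push_eq0. by [].
- move=> [|i] ts hi; first by []. by rewrite push_eqS.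
- by move=> m i ts ne; rewrite push_ne // => e; apply: ne.
Qed.

Lemma part1 (HV : semi_valuation cB V) N : forall F th, fsize F < N -> is_formula F -> thok th ->
  trile (V (ssubst th F)) (Mval cB M (fm_map id (gV th) F)).
Proof.
case: HV => hNot [hOr [hAnd [hEx1 [hAll1 [hEx2 hAll2]]]]].
elim: N => // N IHN F th hs hF hth.
rewrite /Mval.
case: F hs hF => /=.
- move=> n [i|j] ts _ [hn [h2 h3]] //=.
  rewrite /Vabs /=.
  suff -> : [seq IC i | i <- [seq term_val (M:=M) r0 i | i <- [seq iterm_map id i | i <- val ts]]] = val ts
    by apply: trile_refl.
  rewrite -!map_comp -[RHS]map_id; apply: (map_ext_all h2) => -[] //.
- move=> F hs hF.
  apply: trile_trans (hNot _ (lcf_ssubst hth hF)) _.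
  by apply: trile_neg; apply: IHN.
- move=> F0 F1 hs [h0 h1].
  apply: trile_trans (hOr _ _ (lcf_ssubst (F:=FOr F0 F1) hth (conj h0 h1))) _.
  have [p1 p2] := pair2_mono (IHN F0 th ltac:(lia) h0 hth) (IHN F1 th ltac:(lia) h1 hth).
  exact: supDB_mono p1 p2.
- move=> F0 F1 hs [h0 h1].
  apply: trile_trans (hAnd _ _ (lcf_ssubst (F:=FAnd F0 F1) hth (conj h0 h1))) _.
  have [p1 p2] := pair2_mono (IHN F0 th ltac:(lia) h0 hth) (IHN F1 th ltac:(lia) h1 hth).
  exact: infDB_mono p1 p2.
- move=> F hs hF; have hF1 : lcf 1 (fun _ => 0) F := hF.
  apply: trile_trans (hEx1 _ (lcf_ssubst (F:=FEx1 F) hth hF)) _.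
  have key : forall t : Tm0, trile (V (fopen t (ssubst th F)))
      (Meval cB M (scons t r0) (env2_default (M:=M)) (fm_map id (gV th) F)).
    move=> t; rewrite /fopen (@fsubst_ssubst th _ _ F _ hth hF1) -/(fopen t F).
    have hF' : is_formula (fopen t F).
      rewrite /is_formula /fopen; refine (lcf_fsubst hF1 _). by case.
    apply: trile_trans (IHN _ th _ hF' hth) _; first by rewrite /fopen fsize_fsubst; lia.
    rewrite /Mval /fopen fm_map_fsubst Meval_fsubst.
    have -> // : (fun i => term_val (M:=M) r0
      ((fun i => match i with 0 => IC t | j.+1 => IB j end) i)) = scons t r0.
    by apply: functional_extensionality => -[].
  apply: supDB_mono.
  + move=> a [t ->]; eexists; split; [by exists t | exact: key].
  + move=> b [t ->]; eexists; split; [by exists t | exact: key].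
- move=> F hs hF; have hF1 : lcf 1 (fun _ => 0) F := hF.
  apply: trile_trans (hAll1 _ (lcf_ssubst (F:=FAll1 F) hth hF)) _.
  have key : forall t : Tm0, trile (V (fopen t (ssubst th F)))
      (Meval cB M (scons t r0) (env2_default (M:=M)) (fm_map id (gV th) F)).
    move=> t; rewrite /fopen (@fsubst_ssubst th _ _ F _ hth hF1) -/(fopen t F).
    have hF' : is_formula (fopen t F).
      rewrite /is_formula /fopen; refine (lcf_fsubst hF1 _). by case.
    apply: trile_trans (IHN _ th _ hF' hth) _; first by rewrite /fopen fsize_fsubst; lia.
    rewrite /Mval /fopen fm_map_fsubst Meval_fsubst.
    have -> // : (fun i => term_val (M:=M) r0
      ((fun i => match i with 0 => IC t | j.+1 => IB j end) i)) = scons t r0.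
    by apply: functional_extensionality => -[].
  apply: infDB_mono.
  + move=> a [t ->]; eexists; split; [by exists t | exact: key].
  + move=> b [t ->]; eexists; split; [by exists t | exact: key].
- move=> n F hs hF.
  have [hn hF2] : 0 < n /\ lcf 0 (fun m => if m == n then 1 else 0) F := hF.
  apply: trile_trans (hEx2 _ _ (lcf_ssubst (F:=FEx2 n F) hth hF)) _.
  have key : forall T, is_abs n T -> trile (V (sopen n 0 T (ssubst th F)))
     (Meval cB M r0 (push (Vabs V (n:=n) T) (env2_default (M:=M))) (fm_map id (gV th) F)).
    move=> T hT.
    pose j := maxname F.
    pose th' := fun m i => if (m == n) && (i == j) then T else th m i.
    have hth' : thok th'.
      move=> m i hm; rewrite /th'; case: eqP => [->|] /=; last by move=> _; apply: hth.
      by case: eqP => _; [exact: hT | apply: hth].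
    have Hs : ssubst th' (sname n 0 j F) = sopen n 0 T (ssubst th F).
      apply: (ssubst_sname 0 hth hF2 (fresh_maxname F)).
      - by rewrite /th' !eqxx.
      - by move=> m i hi; rewrite /th' (ltn_eqF hi) andbF.
    rewrite -Hs.
    have H : lcf 0 _ (sname n 0 j F) := @lcf_sname n 0 j _ _ _ hF2 ltac:(by rewrite /= eqxx).
    have hF3 : is_formula (sname n 0 j F).
      by apply: lcf_mono2 H _ => x; case: eqP.
    apply: trile_trans (IHN _ th' _ hF3 hth') _; first by rewrite fsize_sname; lia.
    suff -> : Mval cB M (fm_map id (gV th') (sname n 0 j F)) =
      Meval cB M r0 (push (Vabs V (n:=n) T) (env2_default (M:=M))) (fm_map id (gV th) F)
      by apply: trile_refl.
    apply: Meval_sname.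
    + exact: fresh_maxname.
    + by move=> ts; rewrite /th' !eqxx.
    + by move=> m i ts hi; rewrite /th' (ltn_eqF hi) andbF.
    + exact: Rel_top.
  apply: supDB_mono.
  + move=> a [T [hT ->]]; eexists; split; last exact: (key T hT).
    exists (Vabs V T); split => //; by exists T.
  + move=> b [al [[T [hT ->]] ->]]; eexists; split; last exact: (key T hT).
    by exists T.
- move=> n F hs hF.
  have [hn hF2] : 0 < n /\ lcf 0 (fun m => if m == n then 1 else 0) F := hF.
  apply: trile_trans (hAll2 _ _ (lcf_ssubst (F:=FAll2 n F) hth hF)) _.
  have key : forall T, is_abs n T -> trile (V (sopen n 0 T (ssubst th F)))
     (Meval cB M r0 (push (Vabs V (n:=n) T) (env2_default (M:=M))) (fm_map id (gV th) F)).
    move=> T hT.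
    pose j := maxname F.
    pose th' := fun m i => if (m == n) && (i == j) then T else th m i.
    have hth' : thok th'.
      move=> m i hm; rewrite /th'; case: eqP => [->|] /=; last by move=> _; apply: hth.
      by case: eqP => _; [exact: hT | apply: hth].
    have Hs : ssubst th' (sname n 0 j F) = sopen n 0 T (ssubst th F).
      apply: (ssubst_sname 0 hth hF2 (fresh_maxname F)).
      - by rewrite /th' !eqxx.
      - by move=> m i hi; rewrite /th' (ltn_eqF hi) andbF.
    rewrite -Hs.
    have H : lcf 0 _ (sname n 0 j F) := @lcf_sname n 0 j _ _ _ hF2 ltac:(by rewrite /= eqxx).
    have hF3 : is_formula (sname n 0 j F).
      by apply: lcf_mono2 H _ => x; case: eqP.
    apply: trile_trans (IHN _ th' _ hF3 hth') _; first by rewrite fsize_sname; lia.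
    suff -> : Mval cB M (fm_map id (gV th') (sname n 0 j F)) =
      Meval cB M r0 (push (Vabs V (n:=n) T) (env2_default (M:=M))) (fm_map id (gV th) F)
      by apply: trile_refl.
    apply: Meval_sname.
    + exact: fresh_maxname.
    + by move=> ts; rewrite /th' !eqxx.
    + by move=> m i ts hi; rewrite /th' (ltn_eqF hi) andbF.
    + exact: Rel_top.
  apply: infDB_mono.
  + move=> a [T [hT ->]]; eexists; split; last exact: (key T hT).
    exists (Vabs V T); split => //; by exists T.
  + move=> b [al [[T [hT ->]] ->]]; eexists; split; last exact: (key T hT).
    by exists T.
Qed.

End Main.

Lemma lcf_map (C C' : Type) (K K' : nat -> Type) (f : C -> C') (g : forall n, K n -> K' n)
  d1 d2 (G : fm C K) : lcf d1 d2 G -> lcf d1 d2 (fm_map f g G).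
Proof.
elim: G d1 d2 => /=.
- move=> n [i|c] ts d1 d2 [h1 [h2 h3]]; do 2 split => //;
  rewrite all_map; apply: (all_ext h2) => -[] //.
all: by move=> *; intuition.
Qed.

Lemma fm_map_comp (C C' C'' : Type) (K K' K'' : nat -> Type) (f : C' -> C'') (g : forall n, K' n -> K'' n)
  (f' : C -> C') (g' : forall n, K n -> K' n) (f'' : C -> C'') (g'' : forall n, K n -> K'' n) (G : fm C K) :
  (forall c, f (f' c) = f'' c) -> (forall n c, g n (g' n c) = g'' n c) ->
  fm_map f g (fm_map f' g' G) = fm_map f'' g'' G.
Proof.
move=> hf hg; elim: G => /=.
- move=> n p ts; congr FAtom.
  + by case: p => //= c; rewrite hg.
  + apply: val_inj => /=; rewrite -map_comp; apply: eq_map => -[] //= c; by rewrite hf.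
all: by move=> *; congruence.
Qed.

Lemma fresh0_map (f : Empty_set -> Tm0) (g : forall n, Empty_set -> nat) (G : pure_formula) :
  fresh 0 (fm_map f g G).
Proof.
elim: G => /=.
- by move=> n [i|[]] ts.
all: by move=> *; intuition.
Qed.

Section Part2.
Context {disp : Order.disp_t} (B : ctbDistrLatticeType disp) (cB : completeness B).
Variable V : formula -> DB B.

Notation M := (canon_model V).
Notation r0 := (fun _ : nat => 0%N).
Notation gV th := (fun n j => Vabs V (th n j)).

Definition dflt (m : nat) : formula := FAtom (@PC (fun _ => nat) m 0) (nseq_tuple m (IB 0)).

Lemma part2 (HV : semi_valuation cB V) : models_3CA cB M.
Proof.
move=> n k G hn hk hG beta [Tb [hTb ->]].
pose G' : formula := fm_map (fun c : Empty_set => match c return Tm0 with end)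
   (fun m (c : Empty_set) => match c return nat with end) G.
pose th' := fun m (i : nat) => if m == k then Tb else dflt m.
have hth' : thok th'.
  move=> m i hm; rewrite /th'; case: eqP => [->|_] //.
  split; first exact: hm. split; first exact: hm. split => //. by rewrite all_nseq; case: m hm.
have hG' : lcf n (fun m => if m == k then 1 else 0) G' by apply: lcf_map.
have fG' : fresh 0 G' by apply: fresh0_map.
have Hs : forall e Y, lcf e (fun m => if m == k then 1 else 0) Y -> fresh 0 Y ->
    ssubst th' (sname k 0 0 Y) = sopen k 0 Tb Y.
  move=> e Y hY fY; rewrite (@ssubst_sname k 0 Tb th' th' _ _ Y 0 hth' hY fY) ?ssubst_nonames //.
  by rewrite /th' eqxx.
pose T := sopen k 0 Tb G'.
have hT : is_abs n T.
  split => //; rewrite /T -(Hs _ _ hG' fG').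
  apply: lcf_ssubst hth' _.
  have H := @lcf_sname k 0 0 _ _ _ hG' ltac:(by rewrite /= eqxx).
  by apply: lcf_mono2 H _ => x; case: eqP.
exists (Vabs V T); split; first by exists T.
move=> ts.
pose Y := inst G' (map IC ts).
have hY : lcf 0 (fun m => if m == k then 1 else 0) Y.
  apply: (lcf_fsubst hG') => i hi.
  by rewrite (nth_map 0) // size_tuple.
have fY : fresh 0 Y by apply: fresh_fsubst.
have E1 : inst T (map IC ts) = ssubst th' (sname k 0 0 Y).
  rewrite (Hs _ _ hY fY) /Y /inst (sopen_fsubst _ _ _ (proj2 hTb)) //.
have hX : is_formula (sname k 0 0 Y).
  have H := @lcf_sname k 0 0 _ _ _ hY ltac:(by rewrite /= eqxx).
  by apply: lcf_mono2 H _ => x; case: eqP.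
rewrite /Vabs E1.
apply: trile_trans (part1 HV (N := (fsize (sname k 0 0 Y)).+1) _ hX hth') _ => //.
suff -> : Mval cB M (fm_map id (gV th') (sname k 0 0 Y)) =
  Meval cB M (fun i => nth (md0 M) ts i) (push (Vabs V (n:=k) Tb) (env2_default (M:=M))) (embed M G)
  by apply: trile_refl.
rewrite /Mval.
have -> : Meval cB M r0 (env2_default (M:=M)) (fm_map id (gV th') (sname k 0 0 Y)) =
  Meval cB M r0 (push (Vabs V (n:=k) Tb) (env2_default (M:=M))) (fm_map id (gV th') Y).
  apply: Meval_sname.
  - exact: fY.
  - by move=> ts'; rewrite /th' eqxx.
  - by [].
  - exact: Rel_top.
rewrite /Y /inst fm_map_fsubst Meval_fsubst.
have -> : fm_map id (gV th') G' = embed M G.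
  by apply: fm_map_comp => -[].
congr Meval; apply: functional_extensionality => i /=.
case: (ltnP i n) => hi.
- by rewrite (nth_map 0) ?size_tuple.
- by rewrite !nth_default ?size_map ?size_tuple.
Qed.

End Part2.

Theorem mainTheorem5 (disp : Order.disp_t) (B : ctbDistrLatticeType disp)
  (cB : completeness B) (V : formula -> DB B) (HV : semi_valuation cB V) :
  (forall (F : formula) (th : forall n : nat, nat -> formula),
     is_formula F ->
     (forall n j, (0 < n)%N -> is_abs n (th n j)) ->
     trile (V (ssubst th F))
           (Mval cB (canon_model V) (fm_map id (fun n j => Vabs V (th n j)) F)))
  /\ models_3CA cB (canon_model V).
Proof.
split; last exact: part2.
move=> F th hF hth; exact: (part1 HV (N := (fsize F).+1)).
Qed.
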